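(* For every $\alpha>0$ and every positive integer $\ell$ there is $\rho>0$ such that the following holds for every $n$-vertex $\ell$-uniform hypergraph $\mathcal{H}$ with $e(\mathcal{H})\le\rho n^\ell$: for every $p\in[0,1]$, if $R$ is the random subset of $V(\mathcal{H})$ containing each vertex independently with probability $p$, then \[ \Pr\big(e(\mathcal{H}[R])\ge\alpha (np)^\ell\big)\le\exp(-\rho np). \]
   Context: $\mathcal{H}[R]=\{A\in\mathcal{H}:A\subseteq R\}$ and $e(\cdot)$ denotes the number of edges. *)

(* Defs.v *)
From HB Require Import structures.
From mathcomp Require Import all_boot all_order all_algebra.
From mathcomp Require Import reals sequences exp.
Set Implicit Arguments. Unset Strict Implicit. Unset Printing Implicit Defensive.
Import Order.TTheory GRing.Theory Num.Theory.
Local Open Scope ring_scope.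

Definition uniform_hypergraph (V : finType) (l : nat) (H : {set {set V}}) : Prop :=
  forall A, A \in H -> #|A| = l.

Definition induced (V : finType) (H : {set {set V}}) (R : {set V}) : {set {set V}} :=
  [set A in H | A \subset R].

Definition nedges (V : finType) (H : {set {set V}}) : nat := #|H|.

(* Probability that the p-random subset (each vertex independently with
   probability p) equals R. *)
Definition binom_weight (R : realType) (V : finType) (p : R) (S : {set V}) : R :=
  p ^+ #|S| * (1 - p) ^+ (#|V| - #|S|).

Definition prob_rand_subset (R : realType) (V : finType) (p : R)
  (E : pred {set V}) : R :=
  \sum_(S : {set V} | E S) binom_weight p S.

(* Main.v *)
Require Import Defs.
From HB Require Import structures.
From mathcomp Require Import all_boot all_order all_algebra.
From mathcomp Require Import reals sequences exp.
From mathcomp Require Import ring lra.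
Import Order.TTheory GRing.Theory Num.Theory.
Local Open Scope ring_scope.
Set Implicit Arguments. Unset Strict Implicit. Unset Printing Implicit Defensive.


Section NatStuff.
Local Open Scope nat_scope.

Lemma sum_bool_card (T : finType) (a : pred T) : \sum_(x : T) (a x : nat) = #|a|.
Proof. by rewrite -sum1_card [RHS]big_mkcond; apply: eq_bigr => x _; rewrite unfold_in; case: (a x). Qed.

Lemma expn_monoL (m n e : nat) : (m <= n)%N -> (m ^ e <= n ^ e)%N.
Proof. by move=> h; case: e => // e; rewrite leq_exp2r. Qed.

Lemma ffact_le_exp (k n : nat) : (n ^_ k <= n ^ k)%N.
Proof.
elim: k n => [|k IH] n //; rewrite ffactnS expnS leq_mul //.
by apply: leq_trans (IH n.-1) _; apply: expn_monoL; apply: leq_pred.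
Qed.

Lemma bin_le_exp (n k : nat) : ('C(n, k) <= n ^ k)%N.
Proof.
apply: leq_trans (ffact_le_exp k n); rewrite -bin_ffact.
by apply: leq_pmulr; apply: fact_gt0.
Qed.

End NatStuff.

Section Comb.
Local Open Scope nat_scope.
Variable V : finType.
Implicit Types (H G : {set {set V}}) (S : {set V}).

Definition deg H (v : V) := #|[set A in H | v \in A]|.
Definition link H (v : V) := [set A :\ v | A in [set A in H | v \in A]].

Lemma deg_sum H v : deg H v = \sum_(A in H) (v \in A : nat).
Proof.
rewrite /deg -sum1_card [RHS]big_mkcond [LHS]big_mkcond /=.
by apply: eq_bigr => A _; rewrite inE; case: (A \in H); case: (v \in A).
Qed.

Lemma handshake l H : uniform_hypergraph l H -> (\sum_(v : V) deg H v = l * #|H|)%N.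
Proof.
move=> uH; under eq_bigr => v _ do rewrite deg_sum.
rewrite exchange_big /= (eq_bigr (fun _ => l)); first by rewrite sum_nat_const mulnC.
by move=> A AH; rewrite (sum_bool_card (fun v => v \in A)) -(uH A AH).
Qed.

Lemma link_uniform k H v : uniform_hypergraph k.+1 H -> uniform_hypergraph k (link H v).
Proof.
move=> uH B /imsetP [A]; rewrite inE => /andP [AH vA] ->.
have h := cardsD1 v A; rewrite vA uH // add1n in h.
by case: h.
Qed.

Lemma link_card H v : (nedges (link H v) <= deg H v)%N.
Proof. exact: leq_imset_card. Qed.

Lemma deg_induced_le H S v : (deg (induced H S) v <= nedges (induced (link H v) S))%N.
Proof.
rewrite /deg /nedges.
set D := [set A in induced H S | v \in A].
have inj : {in D &, injective (fun A => A :\ v)}.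
  move=> A B; rewrite !inE => /andP [_ vA] /andP [_ vB] e.
  by rewrite -(setD1K vA) -(setD1K vB) e.
rewrite -(card_in_imset inj); apply: subset_leq_card; apply/subsetP => B.
move=> /imsetP [A]; rewrite !inE => /andP [/andP [AH AS] vA] ->.
rewrite /link; apply/andP; split.
  by apply/imsetP; exists A => //; rewrite inE AH vA.
by apply: subset_trans AS; apply: subD1set.
Qed.

Lemma induced_card_le k G S : uniform_hypergraph k G ->
  (nedges (induced G S) <= #|S| ^ k)%N.
Proof.
move=> uG; apply: leq_trans (bin_le_exp _ _).
rewrite -cards_draws; apply: subset_leq_card; apply/subsetP => B.
by rewrite !inE => /andP [BG BS]; rewrite BS (uG B BG) eqxx.
Qed.

Lemma induced_link_D1 H v S : induced (link H v) S = induced (link H v) (S :\ v).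
Proof.
apply/setP => B; rewrite !inE; case BL: (B \in link H v) => //=.
by move: BL => /imsetP [A _ ->]; rewrite subsetD1 setD11 andbT.
Qed.

Lemma deg_notin H S v : v \notin S -> deg (induced H S) v = 0.
Proof.
move=> vS; apply/eqP; rewrite cards_eq0; apply/eqP/setP => A; rewrite !inE.
apply/negbTE; apply/negP => /andP [/andP [_ AS] vA].
by move/subsetP: AS => /(_ v vA); rewrite (negbTE vS).
Qed.

Lemma induced_uniform l H S : uniform_hypergraph l H -> uniform_hypergraph l (induced H S).
Proof. by move=> uH A; rewrite inE => /andP [AH _]; apply: uH. Qed.

Lemma nedges_induced_sum H S : nedges (induced H S) = \sum_(A in H) (A \subset S : nat).
Proof.
rewrite /nedges -sum1_card [RHS]big_mkcond [LHS]big_mkcond /=.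
by apply: eq_bigr => A _; rewrite inE; case: (A \in H); case: (A \subset S).
Qed.

End Comb.

Section Prob.
Variables (R : realType) (V : finType) (p : R).
Hypotheses (p0 : 0 <= p) (p1 : p <= 1).

Local Notation w := (@binom_weight R V p).

Lemma w_ge0 S : 0 <= w S.
Proof. by rewrite /binom_weight mulr_ge0 // exprn_ge0 // subr_ge0. Qed.

Lemma prod_if (A : {set V}) (c : R) :
  \prod_(x : V) (if x \in A then c else 1) = c ^+ #|A|.
Proof. by rewrite -big_mkcond prodr_const. Qed.

Lemma w_prod S : w S = \prod_(x : V) (if x \in S then p else 1 - p).
Proof.
rewrite (bigID (mem S)) /=.
have -> : \prod_(i | i \in S) (if i \in S then p else 1 - p) = p ^+ #|S|.
  by rewrite -prodr_const; apply: eq_bigr => x ->.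
have -> : \prod_(i | i \notin S) (if i \in S then p else 1 - p) = (1 - p) ^+ #|~: S|.
  rewrite -prodr_const; apply: eq_big => x; first by rewrite inE.
  by move=> Hx; rewrite (negbTE Hx).
by rewrite /binom_weight -(cardsC S) addKn.
Qed.
Lemma expect_prod (f : V -> bool -> R) :
  \sum_(S : {set V}) w S * \prod_(x : V) f x (x \in S)
  = \prod_(x : V) (p * f x true + (1 - p) * f x false).
Proof.
pose G := fun x (b : bool) => (if b then p else 1 - p) * f x b.
transitivity (\sum_(S : {set V}) \prod_(x : V) G x (x \in S)).
  by apply: eq_bigr => S _; rewrite w_prod -big_split.
transitivity (\prod_(x : V) \sum_(b : bool) G x b); last first.
  by apply: eq_bigr => x _; rewrite big_bool.
rewrite bigA_distr_bigA.
rewrite (reindex (fun phi : {ffun V -> bool} => [set x | phi x])) /=.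
  by apply: eq_bigr => phi _; apply: eq_bigr => x _; rewrite inE.
exists (fun S : {set V} => [ffun x => x \in S]) => [phi _|S _].
  by apply/ffunP => x; rewrite ffunE inE.
by apply/setP => x; rewrite inE ffunE.
Qed.
Lemma w_sum1 : \sum_(S : {set V}) w S = 1.
Proof.
have E := expect_prod (fun _ _ => 1); simpl in E.
rewrite (eq_bigr (fun S => w S)) in E; last by move=> S _; rewrite big1_eq mulr1.
rewrite {}E big1 // => x _.
by rewrite !mulr1 addrC subrK.
Qed.

Lemma expect_sub (A : {set V}) :
  \sum_(S : {set V}) w S * (A \subset S)%:R = p ^+ #|A|.
Proof.
have E := expect_prod (fun x b => if x \in A then (b%:R : R) else 1).
have H : forall S : {set V}, \prod_(x : V) (if x \in A then ((x \in S)%:R : R) else 1)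
     = (A \subset S)%:R.
  move=> S; rewrite -big_mkcond /=.
  case: (boolP (A \subset S)) => [/subsetP sub|/subsetPn [y yA yS]].
    by rewrite big1 // => x /sub ->.
  by rewrite (bigD1 y) //= (negbTE yS) mul0r.
rewrite (eq_bigr (fun S => w S * (A \subset S)%:R)) in E; last by move=> S _; rewrite H.
rewrite {}E; rewrite -prod_if; apply: eq_bigr => x _.
by case: (x \in A); rewrite ?mulr1 ?mulr0 ?addr0 // addrC subrK.
Qed.

Lemma expect_pow (A : {set V}) (z : R) :
  \sum_(S : {set V}) w S * z ^+ #|S :&: A| = (p * z + (1 - p)) ^+ #|A|.
Proof.
have E := expect_prod (fun x b => if (x \in A) && b then z else 1).
have H : forall S : {set V}, \prod_(x : V) (if (x \in A) && (x \in S) then z else 1)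
     = z ^+ #|S :&: A|.
  by move=> S; rewrite -prod_if; apply: eq_bigr => x _; rewrite inE andbC.
rewrite (eq_bigr (fun S => w S * z ^+ #|S :&: A|)) in E; last by move=> S _; rewrite H.
rewrite {}E; rewrite -prod_if; apply: eq_bigr => x _.
by case: (x \in A); rewrite /= ?mulr1 // addrC subrK.
Qed.

Lemma markov (E : pred {set V}) (Y : {set V} -> R) (t : R) :
  0 < t -> (forall S, 0 <= Y S) -> (forall S, E S -> t <= Y S) ->
  prob_rand_subset p E <= (\sum_(S : {set V}) w S * Y S) / t.
Proof.
move=> t0 Y0 EY; rewrite /prob_rand_subset ler_pdivlMr // mulr_suml.
apply: (le_trans (y := \sum_(S | E S) w S * Y S)).
  by apply: ler_sum => S /EY ES; rewrite ler_wpM2l // w_ge0.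
rewrite [X in _ <= X](bigID E) /= lerDl.
by apply: sumr_ge0 => S _; rewrite mulr_ge0 // w_ge0.
Qed.
Lemma toggle (v : V) (g : {set V} -> R) : (forall S, g S = g (S :\ v)) ->
  \sum_(S : {set V}) w S * ((v \in S)%:R * g S) = p * \sum_(S : {set V}) w S * g S.
Proof.
move=> gv.
pose u (T : {set V}) := p ^+ #|T| * (1 - p) ^+ (#|V| - #|T|.+1).
have key : forall T : {set V}, v \notin T -> w (v |: T) = p * u T /\ w T = (1 - p) * u T.
  move=> T vT; have lt : (#|T| < #|V|)%N.
    have := cardsC T; have : (0 < #|~: T|)%N by apply/card_gt0P; exists v; rewrite inE.
    by move=> h1 h2; rewrite -h2 -addn1 leq_add2l.
  rewrite /binom_weight /u cardsU1 vT /= add1n exprS; split; first by rewrite mulrA.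
  by rewrite -(subnSK lt) exprS mulrCA.
pose h (T : {set V}) := if v \in T then T :\ v else v |: T.
have hK : involutive h.
  move=> T; rewrite /h; case: (boolP (v \in T)) => vT.
    by rewrite !inE eqxx /= setD1K.
  by rewrite setU11 setU1K.
have sp : forall F : {set V} -> R, \sum_(S : {set V} | v \in S) F S = \sum_(T : {set V} | v \notin T) F (v |: T).
  move=> F; rewrite (reindex_inj (inv_inj hK)) /=.
  apply: eq_big => T.
    by rewrite /h; case: (boolP (v \in T)) => vT; rewrite ?setU11 ?setD11 ?vT.
  rewrite /h; case: (boolP (v \in T)) => vT //.
  by rewrite setD11.
rewrite (bigID (fun S : {set V} => v \in S)) /= [in RHS](bigID (fun S : {set V} => v \in S)) /=.
rewrite !sp.
rewrite [X in _ + X = _]big1; last by move=> S /negbTE ->; rewrite mul0r mulr0.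
rewrite addr0.
set U := \sum_(T : {set V} | v \notin T) u T * g T.
have e1 : \sum_(T : {set V} | v \notin T) w (v |: T) * g (v |: T) = p * U.
  rewrite /U big_distrr /=; apply: eq_bigr => T vT.
  by rewrite (key T vT).1 gv setU1K // mulrA.
have e2 : \sum_(T : {set V} | v \notin T) w T * g T = (1 - p) * U.
  rewrite /U big_distrr /=; apply: eq_bigr => T vT.
  by rewrite (key T vT).2 -mulrA.
have e0 : \sum_(T : {set V} | v \notin T) w (v |: T) * ((v \in v |: T)%:R * g (v |: T)) = p * U.
  rewrite -e1; apply: eq_bigr => T vT; by rewrite setU11 mul1r.
rewrite e0 e1 e2 -mulrDl addrC subrK mul1r //.
Qed.
Lemma expR_half_le2 : expR (2^-1 : R) <= 2.
Proof.
have h := expR_ge1Dx (- 2^-1 : R).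
have hp := expR_gt0 (2^-1 : R).
have hm := expRxMexpNx_1 (2^-1 : R).
set a := expR (2^-1) in hp hm *; set b := expR (- 2^-1) in h hm.
nra.
Qed.

Lemma chernoff (A : {set V}) (t : R) :
  prob_rand_subset p (fun S => t <= #|S :&: A|%:R) <= expR (p * #|A|%:R - t / 2).
Proof.
set z := expR (2^-1 : R).
have M := @markov (fun S => t <= #|S :&: A|%:R) (fun S => z ^+ #|S :&: A|) (expR (t / 2)) (expR_gt0 _).
apply: le_trans (M _ _) _.
- by move=> S; rewrite exprn_ge0 // expR_ge0.
- move=> S /= ht; rewrite /z -expRM_natl ler_expR.
  by rewrite ler_pM2r ?invr_gt0.
rewrite expect_pow ler_pdivrMr ?expR_gt0 // -expRD subrK.
rewrite (_ : _ + (1 - p) = 1 + p * (z - 1)); last by ring.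
have hz : z <= 2 := expR_half_le2; have hz0 : 1 <= z.
  by rewrite /z -[X in X <= _]expR0 ler_expR; lra.
rewrite [X in expR X]mulrC expRM_natl lerXn2r ?nnegrE ?expR_ge0 //.
  by rewrite addr_ge0 // mulr_ge0 // subr_ge0.
have h2 : 0 <= p * (2 - z) by rewrite mulr_ge0 // subr_ge0.
by have := expR_ge1Dx p; lra.
Qed.
Lemma prob_mk (E : pred {set V}) :
  prob_rand_subset p E = \sum_(S : {set V}) w S * (E S)%:R.
Proof.
rewrite /prob_rand_subset big_mkcond /=; apply: eq_bigr => S _.
by case: (E S); rewrite ?mulr1 ?mulr0.
Qed.

Lemma prob_le1 (E : pred {set V}) : prob_rand_subset p E <= 1.
Proof.
rewrite -w_sum1 prob_mk; apply: ler_sum => S _.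
by rewrite ler_piMr ?w_ge0 //; case: (E S); rewrite ?ler01.
Qed.

Lemma prob_ge0 (E : pred {set V}) : 0 <= prob_rand_subset p E.
Proof. by apply: sumr_ge0 => S _; apply: w_ge0. Qed.

Lemma prob_union3 (E B1 B2 B3 : pred {set V}) :
  (forall S, E S -> [|| B1 S, B2 S | B3 S]) ->
  prob_rand_subset p E <=
  prob_rand_subset p B1 + prob_rand_subset p B2 + prob_rand_subset p B3.
Proof.
move=> hE; rewrite !prob_mk -!big_split /=; apply: ler_sum => S _.
rewrite -!mulrDr ler_wpM2l ?w_ge0 //.
case ES: (E S); last by rewrite !addr_ge0 // ler0n.
have := hE S ES.
by case: (B1 S); case: (B2 S); case: (B3 S); rewrite //= ?addr0 ?add0r ?lerDl ?lerDr ?ler01 ?addr_ge0 ?ler01.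
Qed.
End Prob.

Lemma expect_edges (R : realType) (V : finType) (p : R) l (H : {set {set V}}) :
  uniform_hypergraph l H ->
  \sum_(S : {set V}) binom_weight p S * (nedges (induced H S))%:R = (nedges H)%:R * p ^+ l.
Proof.
move=> uH.
under eq_bigr => S _ do rewrite nedges_induced_sum natr_sum mulr_sumr.
rewrite exchange_big /=.
rewrite (eq_bigr (fun _ => p ^+ l)); last first.
  by move=> A AH; rewrite -(uH A AH) -expect_sub; apply: eq_bigr => S _.
by rewrite sumr_const mulr_natl.
Qed.

Lemma sum_bool_R (R : realType) (T : finType) (a : pred T) :
  \sum_(x : T) ((a x)%:R : R) = #|a|%:R.
Proof. by rewrite -natr_sum sum_bool_card. Qed.

Section Step.
Variables (R : realType) (k : nat) (alpha rho' : R) (V : finType)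
  (H : {set {set V}}) (p : R).
Hypotheses (alpha0 : 0 < alpha) (rho'0 : 0 < rho') (p0 : 0 <= p) (p1 : p <= 1).
Hypothesis uH : uniform_hypergraph k.+1 H.
Let n : R := #|V|%:R.
Let mu : R := n * p.
Let gam : R := alpha / (8 * 4 ^+ k).
Hypothesis IH : forall G : {set {set V}}, uniform_hypergraph k G ->
  (nedges G)%:R <= rho' * n ^+ k ->
  prob_rand_subset p (fun S => alpha / 16 * (n * p) ^+ k <= (nedges (induced G S))%:R)
  <= expR (- (rho' * n * p)).
Hypothesis hH : (nedges H)%:R * (k.+1)%:R <= gam * rho' / 4 * n ^+ k.+1.
Hypothesis mu0 : 0 < mu.

Let D : {set V} := [set v | rho' * n ^+ k <= (deg H v)%:R].
Let Bv (v : V) : pred {set V} :=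
  fun S => alpha / 16 * mu ^+ k <= (nedges (induced (link H v) S))%:R.
Let N (S : {set V}) : R := \sum_(v : V) ((v \notin D) && (v \in S) && Bv v S)%:R.

Let gam0 : 0 < gam.
Proof. by rewrite /gam divr_gt0 // mulr_gt0 // exprn_gt0. Qed.

Let n0 : 0 < n.
Proof.
have : 0 <= n by rewrite /n ler0n.
rewrite le_eqVlt => /orP [/eqP e|//]; move: mu0; by rewrite /mu -e mul0r ltxx.
Qed.

Lemma D_card : #|D|%:R <= gam / 4 * n.
Proof.
have nk : 0 < rho' * n ^+ k by rewrite mulr_gt0 // exprn_gt0.
have h1 : #|D|%:R * (rho' * n ^+ k) <= \sum_(v in D) ((deg H v)%:R : R).
  rewrite mulr_natl -sumr_const.
  by apply: ler_sum => v; rewrite inE.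
have h2 : \sum_(v in D) ((deg H v)%:R : R) <= \sum_(v : V) ((deg H v)%:R : R).
  rewrite [X in _ <= X](bigID (mem D)) /= lerDl.
  by apply: sumr_ge0 => v _; rewrite ler0n.
have h3 : \sum_(v : V) ((deg H v)%:R : R) = (k.+1)%:R * (nedges H)%:R.
  by rewrite -natr_sum (handshake uH) natrM.
rewrite -(ler_pM2r nk); apply: (le_trans h1); apply: (le_trans h2); rewrite h3.
rewrite mulrC; apply: (le_trans hH); rewrite exprS.
have -> : gam / 4 * n * (rho' * n ^+ k) = gam * rho' / 4 * (n * n ^+ k) by ring.
by [].
Qed.

Lemma deg_pt S v : ((deg (induced H S) v)%:R : R) <=
  ((v \in S) && (v \in D))%:R * #|S|%:R ^+ k
  + ((v \notin D) && (v \in S) && Bv v S)%:R * #|S|%:R ^+ k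
  + (v \in S)%:R * (alpha / 16 * mu ^+ k).
Proof.
have mk : 0 <= mu ^+ k by rewrite exprn_ge0 // ltW.
have a0 : 0 <= alpha / 16 * mu ^+ k by rewrite mulr_ge0 // divr_ge0 // ltW.
have s0 : 0 <= (#|S|%:R : R) ^+ k by rewrite exprn_ge0 // ler0n.
case vS: (v \in S); last first.
  by rewrite deg_notin ?vS //= andbF !mul0r !addr0.
have e1 : ((deg (induced H S) v)%:R : R) <= (nedges (induced (link H v) S))%:R.
  by rewrite ler_nat deg_induced_le.
have e2 : ((nedges (induced (link H v) S))%:R : R) <= #|S|%:R ^+ k.
  by rewrite -natrX ler_nat; apply: induced_card_le; apply: link_uniform.
rewrite /= andbT mul1r.
case vD: (v \in D) => /=.
  rewrite mul1r mul0r addr0; apply: (le_trans e1); apply: (le_trans e2).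
  by rewrite lerDl.
rewrite mul0r add0r.
case B: (Bv v S) => /=.
  by rewrite mul1r; apply: (le_trans e1); apply: (le_trans e2); rewrite lerDl.
rewrite mul0r add0r; apply: (le_trans e1).
by move: B; rewrite /Bv => /negbT; rewrite -ltNge => /ltW.
Qed.

Lemma claim S : alpha * mu ^+ k.+1 <= (nedges (induced H S))%:R ->
  [|| 4 * mu <= #|S :&: setT|%:R, gam * mu <= #|S :&: D|%:R | gam * mu <= N S].
Proof.
apply: contraLR; rewrite !negb_or -!ltNge => /and3P [h1 h2 h3].
rewrite setIT in h1.
set X : R := (nedges (induced H S))%:R.
have hsum : (k.+1)%:R * X <= #|S :&: D|%:R * #|S|%:R ^+ k + N S * #|S|%:R ^+ k
     + #|S|%:R * (alpha / 16 * mu ^+ k).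
  have -> : (k.+1)%:R * X = \sum_(v : V) ((deg (induced H S) v)%:R : R).
    by rewrite -natr_sum (handshake (induced_uniform (S := S) uH)) natrM.
  apply: le_trans (ler_sum _ (P := xpredT) (fun v _ => deg_pt S v)) _.
  rewrite !big_split /= -!mulr_suml.
  rewrite (sum_bool_R R (fun v => (v \in S) && (v \in D))).
  rewrite (sum_bool_R R (fun v => v \in S)).
  have -> : #|(fun v => (v \in S) && (v \in D))| = #|S :&: D|.
    by apply: eq_card => v; rewrite inE.
  have -> : #|(fun v => v \in S)| = #|S| by apply: eq_card.
  by [].
set P := mu ^+ k; set Q := (#|S|%:R : R) ^+ k.
have P0 : 0 < P by rewrite /P exprn_gt0.
have Q0 : 0 <= Q by rewrite /Q exprn_ge0 // ler0n.
have hQ : Q <= 4 ^+ k * P.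
  rewrite /Q /P -exprMn lerXn2r ?nnegrE ?ler0n ?ltW //.
  by rewrite mulr_gt0.
have N0 : 0 <= N S by apply: sumr_ge0 => v _; rewrite ler0n.
have g4 : gam * 4 ^+ k = alpha / 8.
  by rewrite /gam; field; apply: expf_neq0; lra.
have ha : #|S :&: D|%:R * Q <= gam * mu * (4 ^+ k * P).
  by rewrite ler_pM // ?ler0n // ltW.
have hb : N S * Q <= gam * mu * (4 ^+ k * P).
  by rewrite ler_pM // ltW.
have hc : #|S|%:R * (alpha / 16 * P) <= 4 * mu * (alpha / 16 * P).
  have a16 : 0 <= alpha / 16 by rewrite divr_ge0 // ltW.
  have c0 : 0 <= alpha / 16 * P := mulr_ge0 a16 (ltW P0).
  by apply: ler_wpM2r => //; apply: ltW.
have X0 : 0 <= X by rewrite /X ler0n.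
have hk : X <= (k.+1)%:R * X by rewrite ler_peMl // ler1n.
have tot : (k.+1)%:R * X <= alpha / 2 * (mu * P).
  apply: (le_trans hsum).
  have -> : alpha / 2 * (mu * P) = gam * mu * (4 ^+ k * P) + gam * mu * (4 ^+ k * P)
     + 4 * mu * (alpha / 16 * P).
    have -> : gam * mu * (4 ^+ k * P) = (gam * 4 ^+ k) * mu * P by ring.
    by rewrite g4; field.
  by apply: lerD; [apply: lerD|].
rewrite exprS -/P.
have mP : 0 < mu * P by rewrite mulr_gt0.
apply: (le_lt_trans hk); apply: (le_lt_trans tot).
rewrite ltr_pM2r //. have a0 := alpha0; lra.
Qed.

Lemma EN_bound : \sum_(S : {set V}) binom_weight p S * N S <= mu * expR (- (rho' * mu)).
Proof.
rewrite /N; under eq_bigr => S _ do rewrite mulr_sumr.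
rewrite exchange_big /=.
have hv : forall v, \sum_(S : {set V}) binom_weight p S * ((v \notin D) && (v \in S) && Bv v S)%:R
    <= p * expR (- (rho' * mu)).
  move=> v; case vD: (v \in D) => /=.
    rewrite big1 ?mulr_ge0 ?expR_ge0 // => S _; by rewrite mulr0.
  apply: (le_trans (y := p * prob_rand_subset p (Bv v))).
    have inv : forall S : {set V}, (Bv v S)%:R = (Bv v (S :\ v))%:R :> R.
      by move=> S; rewrite /Bv (induced_link_D1 H v S).
    have T := toggle p (v := v) (g := fun S => (Bv v S)%:R) inv; simpl in T.
    rewrite prob_mk -T le_eqVlt; apply/orP; left; apply/eqP.
    by apply: eq_bigr => S _; case: (v \in S); case: (Bv v S);
        rewrite /= ?mulr1 ?mulr0 ?mul1r ?mul0r.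
  rewrite ler_wpM2l //.
  have hlight : (nedges (link H v))%:R <= rho' * n ^+ k.
    move: vD; rewrite /D inE => /negbT; rewrite -ltNge => lt.
    by apply: le_trans (ltW lt); rewrite ler_nat link_card.
  have h := IH (link_uniform (v := v) uH) hlight.
  apply: (le_trans h); by rewrite /mu mulrA.
apply: le_trans (ler_sum _ (P := xpredT) (fun v _ => hv v)) _.
rewrite sumr_const -mulr_natl /mu -/n mulrA.
by rewrite mulrA.
Qed.

Lemma step_bound : prob_rand_subset p
    (fun S => alpha * mu ^+ k.+1 <= (nedges (induced H S))%:R)
  <= expR (- mu) + expR (- (gam / 4 * mu)) + expR (- (rho' * mu)) / gam.
Proof.
apply: le_trans (prob_union3 p0 p1 claim) _.
have m0 := mu0; have g0 := gam0.
apply: lerD; first apply: lerD.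
- apply: le_trans (chernoff p0 p1 setT (4 * mu)) _.
  rewrite ler_expR cardsT -/n /mu; lra.
- apply: le_trans (chernoff p0 p1 D (gam * mu)) _.
  rewrite ler_expR.
  have hd : p * #|D|%:R <= gam / 4 * mu.
    apply: le_trans (ler_wpM2l p0 D_card) _.
    have -> : p * (gam / 4 * n) = gam / 4 * mu by rewrite /mu; ring.
    by [].
  lra.
- apply: le_trans (markov p0 p1 (Y := N) (t := gam * mu) _ _ _) _.
  + by rewrite mulr_gt0.
  + by move=> S; apply: sumr_ge0 => v _; rewrite ler0n.
  + by [].
  rewrite ler_pdivrMr; last by rewrite mulr_gt0.
  apply: (le_trans EN_bound).
  have -> : expR (- (rho' * mu)) / gam * (gam * mu) = mu * expR (- (rho' * mu)).
    by field; rewrite (gt_eqF g0).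
  by [].
Qed.
End Step.

Lemma final_arith (R : realType) (c g mu rho : R) :
  0 < c -> 0 < g -> 0 < mu -> 2 * (1 + 1 / g) / c <= mu -> rho <= c / 2 ->
  expR (- (c * mu)) * (2 + 1 / g) <= expR (- (rho * mu)).
Proof.
move=> c0 g0 m0 hM hr.
set E := expR (c * mu / 2).
have hE : 1 + c * mu / 2 <= E := expR_ge1Dx _.
have hcm : 2 * (1 + 1 / g) <= c * mu.
  by rewrite -ler_pdivrMl // mulrC.
have E0 : 0 < E := expR_gt0 _.
have e1 : expR (- (c * mu)) = E^-1 * E^-1.
  by rewrite -!expRN -expRD; congr expR; field.
have h2 : 2 + 1 / g <= E by lra.
rewrite e1 -mulrA.
apply: (le_trans (y := E^-1)).
  apply: ler_piMr; first by rewrite ltW // invr_gt0.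
  by rewrite mulrC ler_pdivrMr // [1 * E]mul1r.
rewrite -expRN ler_expR.
have : rho * mu <= c / 2 * mu by rewrite ler_pM2r.
lra.
Qed.

Lemma gen (R : realType) (l : nat) : forall alpha : R, 0 < alpha ->
  exists rho : R, 0 < rho /\
    forall (V : finType) (H : {set {set V}}),
      uniform_hypergraph l H ->
      (nedges H)%:R <= rho * (#|V|%:R) ^+ l ->
      forall p : R, 0 <= p -> p <= 1 ->
        prob_rand_subset p
          (fun S : {set V} =>
             alpha * (#|V|%:R * p) ^+ l <= (nedges (induced H S))%:R)
        <= expR (- (rho * #|V|%:R * p)).
Proof.
elim: l => [|k IHk] alpha a0.
  exists (1 / 2); split; first lra.
  move=> V H uH hH p p0 p1.
  have H0 : nedges H = 0%N.
    apply/eqP; rewrite -leqn0 -ltnS -(ltr_nat R).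
    by rewrite expr0 mulr1 in hH; lra.
  rewrite /prob_rand_subset big_pred0 ?expR_ge0 // => S.
  apply/negbTE; rewrite -ltNge expr0 mulr1.
  have : (nedges (induced H S) <= nedges H)%N.
    by apply: subset_leq_card; apply/subsetP => A; rewrite inE => /andP [].
  rewrite H0 leqn0 => /eqP ->; by [].
have a16 : 0 < alpha / 16 by lra.
have [rho' [r0 IH']] := IHk (alpha / 16) a16.
set gam := alpha / (8 * 4 ^+ k).
have g0 : 0 < gam by rewrite divr_gt0 // mulr_gt0 // exprn_gt0.
set c := Order.min 1 (Order.min (gam / 4) rho').
have g4 : 0 < gam / 4 by lra.
have c0 : 0 < c by rewrite !lt_min ltr01 g4 r0.
have c1 : c <= 1 by rewrite ge_min lexx.
have c2 : c <= gam / 4 by rewrite ge_min ge_min lexx orbT.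
have c3 : c <= rho' by rewrite ge_min ge_min lexx !orbT.
set M := 2 * (1 + 1 / gam) / c.
have M0 : 0 < M by rewrite divr_gt0 // mulr_gt0 // addr_gt0 // divr_gt0.
have k0 : 0 < (k.+1)%:R :> R by rewrite ltr0n.
set rho := Order.min (gam * rho' / (4 * (k.+1)%:R)) (Order.min (c / 2) (1 / (1 / alpha + M))).
have r1 : rho <= gam * rho' / (4 * (k.+1)%:R) by rewrite ge_min lexx.
have r2 : rho <= c / 2 by rewrite ge_min ge_min lexx orbT.
have r3 : rho <= 1 / (1 / alpha + M) by rewrite ge_min ge_min lexx !orbT.
have rho0 : 0 < rho.
  rewrite !lt_min; apply/and3P; split.
  - by rewrite divr_gt0 // mulr_gt0.
  - lra.
  - by rewrite divr_gt0 // addr_gt0 // divr_gt0.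
exists rho; split => // V H uH hH p p0 p1.
set n : R := #|V|%:R.
have n0 : 0 <= n by rewrite /n ler0n.
have [mle|mgt] := leP (n * p) 0.
  apply: le_trans (prob_le1 p0 p1 _) _.
  have h := expR_ge1Dx (- (rho * n * p)).
  have : rho * (n * p) <= 0 by rewrite pmulr_rle0.
  rewrite mulrA; lra.
have [small|large] := ltP (n * p) M.
  have Q0 : 0 < (n * p) ^+ k.+1 by rewrite exprn_gt0.
  have t0 : 0 < alpha * (n * p) ^+ k.+1 by rewrite mulr_gt0.
  apply: le_trans (markov p0 p1 (Y := fun S => (nedges (induced H S))%:R)
    (t := alpha * (n * p) ^+ k.+1) t0 _ _) _.
  - by move=> S; rewrite ler0n.
  - by [].
  rewrite (expect_edges p uH) ler_pdivrMr //.
  have hE : (nedges H)%:R * p ^+ k.+1 <= rho * (n * p) ^+ k.+1.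
    rewrite exprMn mulrA ler_wpM2r // exprn_ge0 //.
  apply: (le_trans hE).
  rewrite mulrA ler_pM2r //.
  have e1 := expR_ge1Dx (- (rho * n * p)).
  have hr : rho * (1 / alpha + M) <= 1.
    by rewrite -ler_pdivlMr // addr_gt0 // divr_gt0.
  have hm : rho * (1 / alpha + n * p) <= 1.
    apply: le_trans hr; rewrite ler_pM2l // lerD2l; exact: ltW.
  have hm' : rho / alpha + rho * (n * p) <= 1.
    by move: hm; rewrite mulrDr mulrA mulr1.
  rewrite -ler_pdivrMr // -mulrA.
  rewrite -mulrA in e1; lra.
have hH' : (nedges H)%:R * (k.+1)%:R <= gam * rho' / 4 * n ^+ k.+1.
  have nl : 0 <= n ^+ k.+1 by rewrite exprn_ge0.
  have h1 : (nedges H)%:R * (k.+1)%:R <= rho * n ^+ k.+1 * (k.+1)%:R.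
    by rewrite ler_wpM2r // ltW.
  apply: (le_trans h1).
  have h2 : rho * (k.+1)%:R <= gam * rho' / 4.
    move: r1; rewrite ler_pdivlMr ?mulr_gt0 //.
    move=> h; lra.
  rewrite mulrAC ler_wpM2r //.
have SB := step_bound a0 r0 p0 p1 uH (fun G uG hG => IH' V G uG hG p p0 p1) hH' mgt.
apply: le_trans SB _.
rewrite -/n -/gam.
set mu := n * p.
have e1 : expR (- mu) <= expR (- (c * mu)).
  by rewrite ler_expR lerN2 ger_pMl.
have e2 : expR (- (gam / 4 * mu)) <= expR (- (c * mu)).
  by rewrite ler_expR lerN2 ler_pM2r.
have e3 : expR (- (rho' * mu)) / gam <= expR (- (c * mu)) / gam.
  by rewrite ler_pM2r ?invr_gt0 // ler_expR lerN2 ler_pM2r.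
apply: (le_trans (y := expR (- (c * mu)) * (2 + 1 / gam))).
  have -> : expR (- (c * mu)) * (2 + 1 / gam) =
    expR (- (c * mu)) + expR (- (c * mu)) + expR (- (c * mu)) / gam by field; rewrite (gt_eqF g0).
  by apply: lerD; first apply: lerD.
rewrite -mulrA -/mu; apply: final_arith => //.
Qed.

Unset Implicit Arguments.

Theorem mainTheorem5 :
  forall (R : realType) (alpha : R) (l : nat),
    0 < alpha -> (0 < l)%N ->
    exists rho : R, 0 < rho /\
      forall (V : finType) (H : {set {set V}}),
        uniform_hypergraph l H ->
        (nedges H)%:R <= rho * (#|V|%:R) ^+ l ->
        forall p : R, 0 <= p -> p <= 1 ->
          prob_rand_subset p
            (fun S : {set V} =>
               alpha * (#|V|%:R * p) ^+ l <= (nedges (induced H S))%:R)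
          <= expR (- (rho * #|V|%:R * p)).
Proof.
move=> R alpha l a0 _.
exact: gen.
Qed.
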